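(* Let $\{\triangleright, ;\}\subseteq\sigma\subseteq\{\triangleright, ;, \wedge, \mathrm{upd}, \sqcup, \mathsf{D}, \mathsf{A}\}$ and let $\mathcal{A}$ be a $\sigma$-algebra that is representable by partial functions and whose atoms are separating. Write $\mathrm{At}(\mathcal{A})$ for its set of atoms, and define $a\sim b$ iff $a\lhd b = b$ and $b\lhd a = a$ (an equivalence relation). If $\mathsf{D},\mathsf{A}\notin\sigma$, for each $a\in\mathcal{A}$ let $\theta(a)$ be the partial function on the disjoint union $\mathrm{At}(\mathcal{A}) \amalg (\mathrm{At}(\mathcal{A})/{\sim})$ given, for $x\in\mathrm{At}(\mathcal{A})$, by $\theta(a)(x) = x;a$ if $x;a\neq 0$ (undefined otherwise) and $\theta(a)(x/{\sim}) = x\lhd a$ if $x\lhd a\ne 0$ (undefined otherwise). If $\mathsf{D}\in\sigma$ or $\mathsf{A}\in\sigma$, let instead $\theta(a)$ be the partial function on $\mathrm{At}(\mathcal{A})$ given by $\theta(a)(x)=x;a$ if $x;a\ne0$ and undefined otherwise. Then $\theta$ is well defined (its values are atoms, and the second component does not depend on the choice of representative of $x/{\sim}$) and is a representation of $\mathcal{A}$ by partial functions. Moreover: (1) if composition in $\mathcal{A}$ is completely left-distributive over joins, then $\theta$ is join complete; (2) if composition in $\mathcal{A}$ is completely left-distributive over meets, then $\theta$ is meet complete.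
   Context: The operations are interpreted on partial functions on a base set $X$ as: $f \triangleright g = \{(x,y) \in g : x \notin \mathrm{dom}(f)\}$; $f;g=\{(x,z):\exists y\,((x,y)\in f,(y,z)\in g)\}$; $f\wedge g = f\cap g$; $\mathrm{upd}(f,g)(x)$ is $f(x)$ if $f(x)$ defined and $g(x)$ undefined, $g(x)$ if both defined, undefined otherwise; $(f\sqcup g)(x)$ is $f(x)$ if defined, else $g(x)$; $\mathsf{D}(f)$ = identity on $\mathrm{dom}(f)$; $\mathsf{A}(f)$ = identity on $X\setminus\mathrm{dom}(f)$. A representation by partial functions is an isomorphism onto a $\sigma$-algebra of partial functions with these operations. Define $0 := a\triangleright a$, $a\lhd b := (a\triangleright b)\triangleright b$, $a \le b :\iff a\lhd b = a$; for representable algebras this is a partial order with least element $0$. An atom is a minimal nonzero element; atoms are separating if whenever $a\not\le b$ there is an atom $c\le a$ with $c\not\le b$. Composition is completely left-distributive over joins if for all $S$ with $\bigvee S$ existing and all $a$, $\bigvee\{a;s:s\in S\}$ exists and equals $a;\bigvee S$; over meets, the same with nonempty $S$ and meets. $\theta$ is join complete if $\theta(\bigvee S)=\bigcup\theta[S]$ whenever $\bigvee S$ exists; meet complete if $\theta(\bigwedge S)=\bigcap\theta[S]$ whenever $S\ne\emptyset$ and $\bigwedge S$ exists. *)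

(* Defs.v *)
From Stdlib Require Import Classical ClassicalEpsilon RelationClasses.

Unset Implicit Arguments.

Inductive sym := Prec | Comp | Meet | Upd | Join | Dom | Antidom.

(** An algebra carrying all seven operations; a σ-algebra (σ : sym -> Prop)
    is such an algebra in which only the operations in σ are meaningful
    (the others are arbitrary and are ignored by all notions below). *)
Record alg := Alg {
  car : Type;
  prec : car -> car -> car;
  comp : car -> car -> car;
  meet : car -> car -> car;
  upd  : car -> car -> car;
  join : car -> car -> car;
  dom  : car -> car;
  antidom : car -> car
}.
Arguments prec {a}. Arguments comp {a}. Arguments meet {a}. Arguments upd {a}.
Arguments join {a}. Arguments dom {a}. Arguments antidom {a}.

Definition pf (X : Type) := X -> option X.

Definition pf_prec {X} (f g : pf X) : pf X :=
  fun x => match f x with Some _ => None | None => g x end.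
Definition pf_comp {X} (f g : pf X) : pf X :=
  fun x => match f x with Some y => g y | None => None end.
Definition pf_meet {X} (f g : pf X) : pf X :=
  fun x => match f x, g x with
           | Some y, Some z => if excluded_middle_informative (y = z) then Some y else None
           | _, _ => None end.
Definition pf_upd {X} (f g : pf X) : pf X :=
  fun x => match f x, g x with
           | Some _, Some z => Some z
           | Some y, None => Some y
           | None, _ => None end.
Definition pf_join {X} (f g : pf X) : pf X :=
  fun x => match f x with Some y => Some y | None => g x end.
Definition pf_dom {X} (f : pf X) : pf X :=
  fun x => match f x with Some _ => Some x | None => None end.
Definition pf_antidom {X} (f : pf X) : pf X :=
  fun x => match f x with Some _ => None | None => Some x end.

Definition is_rep (A : alg) (sigma : sym -> Prop) (X : Type) (th : car A -> pf X) : Prop :=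
  (forall a b, (forall x, th a x = th b x) -> a = b) /\
  (sigma Prec -> forall a b x, th (prec a b) x = pf_prec (th a) (th b) x) /\
  (sigma Comp -> forall a b x, th (comp a b) x = pf_comp (th a) (th b) x) /\
  (sigma Meet -> forall a b x, th (meet a b) x = pf_meet (th a) (th b) x) /\
  (sigma Upd -> forall a b x, th (upd a b) x = pf_upd (th a) (th b) x) /\
  (sigma Join -> forall a b x, th (join a b) x = pf_join (th a) (th b) x) /\
  (sigma Dom -> forall a x, th (dom a) x = pf_dom (th a) x) /\
  (sigma Antidom -> forall a x, th (antidom a) x = pf_antidom (th a) x).

Definition representable (A : alg) (sigma : sym -> Prop) : Prop :=
  exists (X : Type) (th : car A -> pf X), is_rep A sigma X th.

Section Order.
Variable A : alg.

(** a ◁ b := (a ▷ b) ▷ b ;  a ≤ b :<-> a ◁ b = a.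
    0 := a ▷ a (for representable algebras this does not depend on a). *)
Definition lhd (a b : car A) : car A := prec (prec a b) b.
Definition le (a b : car A) : Prop := lhd a b = a.

Definition is_zero (z : car A) : Prop := z = prec z z.

Definition atom (x : car A) : Prop :=
  ~ is_zero x /\ forall y, ~ is_zero y -> le y x -> y = x.

Definition atoms_separating : Prop :=
  forall a b, ~ le a b -> exists c, atom c /\ le c a /\ ~ le c b.

Definition sim (a b : car A) : Prop := lhd a b = b /\ lhd b a = a.

Definition is_join (S : car A -> Prop) (j : car A) : Prop :=
  (forall s, S s -> le s j) /\ (forall u, (forall s, S s -> le s u) -> le j u).
Definition is_meet (S : car A -> Prop) (m : car A) : Prop :=
  (forall s, S s -> le m s) /\ (forall u, (forall s, S s -> le u s) -> le u m).

Definition img (a : car A) (S : car A -> Prop) : car A -> Prop :=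
  fun t => exists s, S s /\ t = comp a s.

Definition comp_cld_joins : Prop :=
  forall (S : car A -> Prop) j a, is_join S j -> is_join (img a S) (comp a j).
Definition comp_cld_meets : Prop :=
  forall (S : car A -> Prop) m a, (exists s, S s) -> is_meet S m ->
    is_meet (img a S) (comp a m).

Definition join_complete {X : Type} (th : car A -> pf X) : Prop :=
  forall (S : car A -> Prop) j, is_join S j ->
    forall x y, th j x = Some y <-> exists s, S s /\ th s x = Some y.
Definition meet_complete {X : Type} (th : car A -> pf X) : Prop :=
  forall (S : car A -> Prop) m, (exists s, S s) -> is_meet S m ->
    forall x y, th m x = Some y <-> forall s, S s -> th s x = Some y.

Definition At : Type := { x : car A | atom x }.
(** At(A)/~ : the ~-classes of atoms, as predicates. *)
Definition AtQ : Type :=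
  { C : car A -> Prop | exists x, atom x /\ forall y, C y <-> (atom y /\ sim x y) }.

Definition rep (C : AtQ) : car A :=
  proj1_sig (constructive_indefinite_description _ (proj2_sig C)).

(** Partial atom-valued map: u ↦ u if u is an atom, undefined otherwise
    (for the values used below, which are atoms or 0, this is
    "defined iff u ≠ 0"). *)
Definition as_atom (u : car A) : option At :=
  match excluded_middle_informative (atom u) with
  | left p => Some (exist (fun x => atom x) u p)
  | right _ => None
  end.

Definition opt_map {U V : Type} (f : U -> V) (o : option U) : option V :=
  match o with Some u => Some (f u) | None => None end.

(** θ when D, A ∉ σ : base set At(A) ⊔ At(A)/~ . *)
Definition theta1 (a : car A) : pf (At + AtQ) :=
  fun p => match p with
           | inl x => opt_map inl (as_atom (comp (proj1_sig x) a))
           | inr C => opt_map inl (as_atom (lhd (rep C) a))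
           end.

(** θ when D ∈ σ or A ∈ σ : base set At(A). *)
Definition theta2 (a : car A) : pf At :=
  fun x => as_atom (comp (proj1_sig x) a).

End Order.

(* Main.v *)
Require Import Defs.
From Stdlib Require Import Classical ClassicalEpsilon RelationClasses.

Section Main.
Variables (A : alg) (X : Type) (th : car A -> pf X).
Hypothesis inj : forall a b, (forall x, th a x = th b x) -> a = b.
Hypothesis hprec : forall a b x, th (prec a b) x = pf_prec (th a) (th b) x.
Hypothesis hcomp : forall a b x, th (comp a b) x = pf_comp (th a) (th b) x.

Lemma zero_iff z : is_zero A z <-> forall p, th z p = None.
Proof.
  unfold is_zero; split.
  - intros H p. destruct (th z p) eqn:E; [|reflexivity].
    pose proof (hprec z z p) as Hp. rewrite <- H in Hp. unfold pf_prec in Hp. rewrite E in Hp. congruence.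
  - intros H. apply inj. intros p. rewrite hprec. unfold pf_prec. rewrite H. reflexivity.
Qed.

Lemma lhd_th a b p : th (lhd A a b) p = match th a p with Some _ => th b p | None => None end.
Proof. unfold lhd. rewrite hprec. unfold pf_prec. rewrite hprec. unfold pf_prec.
  destruct (th a p); [| destruct (th b p)]; reflexivity. Qed.

Lemma le_iff a b : le A a b <-> (forall p y, th a p = Some y -> th b p = Some y).
Proof. unfold le; split.
 - intros H p y Hy. pose proof (lhd_th a b p) as E. rewrite H, Hy in E. congruence.
 - intros H. apply inj; intros p. rewrite lhd_th. destruct (th a p) eqn:E; [exact (H _ _ E) | reflexivity].
Qed.

Lemma le_antisym a b : le A a b -> le A b a -> a = b.
Proof. rewrite !le_iff. intros H1 H2. apply inj. intro p.
  destruct (th a p) eqn:E. - rewrite (H1 _ _ E). reflexivity.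
  - destruct (th b p) eqn:E2; [|reflexivity]. rewrite (H2 _ _ E2) in E. discriminate. Qed.

Lemma atom_dom x u : atom A x -> ~ is_zero A u -> (forall p, th u p <> None -> th x p <> None) -> forall p, th x p <> None -> th u p <> None.
Proof.
  intros [Hnz Hmin] Hu Hsub.
  assert (E : lhd A u x = x).
  { apply Hmin.
    - intro Hz. apply Hu. apply zero_iff. intro p. rewrite zero_iff in Hz. specialize (Hz p). rewrite lhd_th in Hz.
      destruct (th u p) eqn:Eu; [|reflexivity]. exfalso. apply (Hsub p). rewrite Eu; discriminate. exact Hz.
    - apply le_iff. intros p y. rewrite lhd_th. destruct (th u p); [auto|discriminate]. }
  intros p Hp Hn. apply Hp. rewrite <- E. rewrite lhd_th. rewrite Hn. reflexivity.
Qed.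

Lemma atom_sub x v : atom A x -> ~ is_zero A v -> (forall p, th v p <> None -> th x p <> None) -> atom A v.
Proof. intros Hx Hv Hs. split; [exact Hv|]. intros y Hy Hle.
  pose proof (proj1 (le_iff y v) Hle) as Hl.
  assert (Hd : forall p, th x p <> None -> th y p <> None).
  { apply (atom_dom x y Hx Hy). intros p Hp. apply Hs. destruct (th y p) eqn:E; [|congruence].
    rewrite (Hl _ _ E). discriminate. }
  apply inj. intros p. destruct (th y p) eqn:E.
  - rewrite (Hl _ _ E). reflexivity.
  - destruct (th v p) eqn:E2; [|reflexivity]. exfalso. apply (Hd p); [apply Hs; rewrite E2; discriminate | exact E].
Qed.

Lemma atom_eq w v : atom A w -> ~ is_zero A v -> le A v w -> v = w.
Proof. intros [_ H] Hv Hl. exact (H v Hv Hl). Qed.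

Lemma as_atom_zero v : is_zero A v -> as_atom A v = None.
Proof. intro H. unfold as_atom. destruct (excluded_middle_informative (atom A v)) as [a|]; [exfalso; exact (proj1 a H)|reflexivity]. Qed.

Lemma as_atom_some v : atom A v -> exists w, as_atom A v = Some w /\ proj1_sig w = v.
Proof. intro H. unfold as_atom. destruct (excluded_middle_informative (atom A v)); [|tauto]. eexists; split; reflexivity. Qed.

Lemma as_atom_inv v w : as_atom A v = Some w -> atom A v /\ proj1_sig w = v.
Proof. unfold as_atom. destruct (excluded_middle_informative (atom A v)); [|discriminate]. intro H; split; [assumption|]. inversion H; reflexivity. Qed.

Lemma as_atom_self (w : At A) : as_atom A (proj1_sig w) = Some w.
Proof. destruct w as [w Hw]. simpl. unfold as_atom. destruct (excluded_middle_informative (atom A w)); [|tauto].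
  f_equal. f_equal. apply proof_irrelevance. Qed.

Lemma At_eq (w1 w2 : At A) : proj1_sig w1 = proj1_sig w2 -> w1 = w2.
Proof. destruct w1 as [v1 h1], w2 as [v2 h2]; simpl; intro E; subst v2. f_equal; apply proof_irrelevance. Qed.

Section Sel.
Variables (x : car A) (g : pf X) (T : car A -> car A).
Hypothesis hx : atom A x.
Hypothesis hg : forall p, g p <> None <-> th x p <> None.
Hypothesis hT : forall a p, th (T a) p = pf_comp g (th a) p.

Lemma T_dom a p : th (T a) p <> None -> th x p <> None.
Proof. rewrite hT. unfold pf_comp. intro H. apply hg. destruct (g p); congruence. Qed.

Lemma T_atom a : ~ is_zero A (T a) -> atom A (T a).
Proof. intro H. exact (atom_sub x (T a) hx H (T_dom a)). Qed.

Lemma T_total a : ~ is_zero A (T a) -> forall p q, g p = Some q -> th a q <> None.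
Proof. intros H p q Hg. pose proof (atom_dom x (T a) hx H (T_dom a) p) as D.
  assert (Hx : th x p <> None) by (apply hg; congruence).
  specialize (D Hx). rewrite hT in D. unfold pf_comp in D. rewrite Hg in D. exact D. Qed.

Lemma T_zero a : is_zero A (T a) -> forall p q, g p = Some q -> th a q = None.
Proof. intros H p q Hg. rewrite zero_iff in H. specialize (H p). rewrite hT in H. unfold pf_comp in H. rewrite Hg in H. exact H. Qed.

Lemma T_ext a b : (forall p q, g p = Some q -> th a q = th b q) -> T a = T b.
Proof. intros H. apply inj. intro p. rewrite !hT. unfold pf_comp. destruct (g p) eqn:E; [apply (H p); exact E | reflexivity]. Qed.

Lemma T_zero_of a : (forall p q, g p = Some q -> th a q = None) -> is_zero A (T a).
Proof. intro H. apply zero_iff. intro p. rewrite hT. unfold pf_comp. destruct (g p) eqn:E; [apply (H p); exact E|reflexivity]. Qed.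

Lemma T_mono a b : le A a b -> le A (T a) (T b).
Proof. rewrite !le_iff. intros H p y. rewrite !hT. unfold pf_comp. destruct (g p); [apply H | discriminate]. Qed.

Lemma T_le_eq a b : le A (T a) (T b) -> ~ is_zero A (T a) -> T a = T b.
Proof. intros Hle Hz. apply atom_eq; [|exact Hz|exact Hle]. apply T_atom. intro Hb. apply Hz. apply zero_iff. intro p.
  destruct (th (T a) p) eqn:E; [|reflexivity]. rewrite le_iff in Hle. apply Hle in E. rewrite zero_iff in Hb. congruence. Qed.

Lemma T_comp a b : T (comp a b) = comp (T a) b.
Proof. apply inj. intro p. rewrite hT, hcomp. unfold pf_comp. rewrite hT. unfold pf_comp.
  destruct (g p); [rewrite hcomp; reflexivity | reflexivity]. Qed.

Lemma V_prec a b : as_atom A (T (prec a b)) = match as_atom A (T a) with Some _ => None | None => as_atom A (T b) end.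
Proof. destruct (classic (is_zero A (T a))) as [Hz|Hz].
  - rewrite (as_atom_zero _ Hz). f_equal. apply T_ext. intros p q Hq. rewrite hprec. unfold pf_prec.
    rewrite (T_zero a Hz p q Hq). reflexivity.
  - destruct (as_atom_some _ (T_atom a Hz)) as [w [Hw _]]. rewrite Hw. apply as_atom_zero. apply T_zero_of.
    intros p q Hq. rewrite hprec. unfold pf_prec. destruct (th a q) eqn:E; [reflexivity|].
    exfalso. exact (T_total a Hz p q Hq E). Qed.

Lemma V_comp a b : as_atom A (T (comp a b)) = match as_atom A (T a) with Some w => as_atom A (comp (proj1_sig w) b) | None => None end.
Proof. rewrite T_comp. destruct (as_atom A (T a)) eqn:E.
  - apply as_atom_inv in E. destruct E as [_ E]. rewrite E. reflexivity.
  - apply as_atom_zero. apply zero_iff. intro p. rewrite hcomp. unfold pf_comp.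
    destruct (classic (is_zero A (T a))) as [Hz|Hz].
    + rewrite zero_iff in Hz. rewrite Hz. reflexivity.
    + destruct (as_atom_some _ (T_atom a Hz)) as [w [Hw _]]. congruence. Qed.

Section Meet.
Hypothesis hmeet : forall a b x, th (meet a b) x = pf_meet (th a) (th b) x.
Lemma V_meet a b : as_atom A (T (meet a b)) = match as_atom A (T a), as_atom A (T b) with
  | Some y, Some z => if excluded_middle_informative (y = z) then Some y else None | _, _ => None end.
Proof.
  destruct (classic (is_zero A (T a))) as [Ha|Ha].
  { rewrite (as_atom_zero _ Ha). apply as_atom_zero. apply T_zero_of. intros p q Hq. rewrite hmeet. unfold pf_meet.
    rewrite (T_zero a Ha p q Hq). reflexivity. }
  destruct (classic (is_zero A (T b))) as [Hb|Hb].
  { rewrite (as_atom_zero (T b) Hb). destruct (as_atom A (T a)); (apply as_atom_zero; apply T_zero_of; intros p q Hq; rewrite hmeet; unfold pf_meet;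
    rewrite (T_zero b Hb p q Hq); destruct (th a q); reflexivity). }
  destruct (as_atom_some _ (T_atom a Ha)) as [w1 [Hw1 E1]]. destruct (as_atom_some _ (T_atom b Hb)) as [w2 [Hw2 E2]].
  rewrite Hw1, Hw2.
  destruct (excluded_middle_informative (w1 = w2)) as [e|ne].
  - subst w2. assert (Hab : T a = T b) by congruence.
    assert (HM : T (meet a b) = T a).
    { apply T_ext. intros p q Hq. rewrite hmeet. unfold pf_meet.
      assert (Eq : th a q = th b q).
      { pose proof (f_equal (fun t => th t p) Hab) as F. simpl in F. rewrite !hT in F. unfold pf_comp in F. rewrite Hq in F. exact F. }
      rewrite <- Eq. destruct (th a q) as [c|] eqn:E. 
      + destruct (excluded_middle_informative (c = c)); [reflexivity|congruence].
      + reflexivity. }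
    rewrite HM. exact Hw1.
  - apply as_atom_zero. apply NNPP. intro Hm.
    assert (L1 : le A (meet a b) a).
    { apply le_iff. intros p y. rewrite hmeet. unfold pf_meet. destruct (th a p) as [c|], (th b p) as [c0|]; try discriminate.
      destruct (excluded_middle_informative (c = c0)); congruence. }
    assert (L2 : le A (meet a b) b).
    { apply le_iff. intros p y. rewrite hmeet. unfold pf_meet. destruct (th a p) as [c|], (th b p) as [c0|]; try discriminate.
      destruct (excluded_middle_informative (c = c0)); congruence. }
    pose proof (T_le_eq _ _ (T_mono _ _ L1) Hm) as M1. pose proof (T_le_eq _ _ (T_mono _ _ L2) Hm) as M2.
    apply ne. apply At_eq. congruence.
Qed.
End Meet.

Lemma V_upd (hupd : forall a b x, th (upd a b) x = pf_upd (th a) (th b) x) a b :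
  as_atom A (T (upd a b)) = match as_atom A (T a), as_atom A (T b) with
           | Some _, Some z => Some z | Some y, None => Some y | None, _ => None end.
Proof.
  destruct (classic (is_zero A (T a))) as [Ha|Ha].
  { rewrite (as_atom_zero _ Ha). apply as_atom_zero. apply T_zero_of. intros p q Hq. rewrite hupd. unfold pf_upd.
    rewrite (T_zero a Ha p q Hq). reflexivity. }
  destruct (as_atom_some _ (T_atom a Ha)) as [w1 [Hw1 E1]]. rewrite Hw1.
  destruct (classic (is_zero A (T b))) as [Hb|Hb].
  - rewrite (as_atom_zero (T b) Hb). rewrite <- Hw1. f_equal. apply T_ext. intros p q Hq. rewrite hupd. unfold pf_upd.
    rewrite (T_zero b Hb p q Hq). destruct (th a q); reflexivity.
  - destruct (as_atom_some _ (T_atom b Hb)) as [w2 [Hw2 E2]]. rewrite Hw2. rewrite <- Hw2. f_equal.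
    apply T_ext. intros p q Hq. rewrite hupd. unfold pf_upd.
    pose proof (T_total a Ha p q Hq). pose proof (T_total b Hb p q Hq).
    destruct (th a q), (th b q); congruence. Qed.

Lemma V_join (hjoin : forall a b x, th (join a b) x = pf_join (th a) (th b) x) a b :
  as_atom A (T (join a b)) = match as_atom A (T a) with Some y => Some y | None => as_atom A (T b) end.
Proof.
  destruct (classic (is_zero A (T a))) as [Ha|Ha].
  - rewrite (as_atom_zero _ Ha). f_equal. apply T_ext. intros p q Hq. rewrite hjoin. unfold pf_join.
    rewrite (T_zero a Ha p q Hq). reflexivity.
  - destruct (as_atom_some _ (T_atom a Ha)) as [w1 [Hw1 E1]]. rewrite Hw1. rewrite <- Hw1. f_equal.
    apply T_ext. intros p q Hq. rewrite hjoin. unfold pf_join.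
    pose proof (T_total a Ha p q Hq). destruct (th a q); congruence. Qed.

Lemma V_join_complete (S : car A -> Prop) j : is_join A S j ->
  (~ is_zero A (T j) -> exists s, S s /\ ~ is_zero A (T s)) ->
  forall y, as_atom A (T j) = Some y <-> exists s, S s /\ as_atom A (T s) = Some y.
Proof.
  intros [Hub _] Hex y. split.
  - intro H. destruct (as_atom_inv _ _ H) as [[Hz _] _]. destruct (Hex Hz) as [s [Hs Hsz]].
    exists s. split; [exact Hs|]. rewrite (T_le_eq s j (T_mono _ _ (Hub s Hs)) Hsz). exact H.
  - intros [s [Hs H]]. destruct (as_atom_inv _ _ H) as [[Hz _] _].
    rewrite <- (T_le_eq s j (T_mono _ _ (Hub s Hs)) Hz). exact H. Qed.

Lemma V_meet_complete (S : car A -> Prop) m : (exists s, S s) -> is_meet A S m ->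
  (forall v, (forall s, S s -> T s = v) -> T m = v) ->
  forall y, as_atom A (T m) = Some y <-> forall s, S s -> as_atom A (T s) = Some y.
Proof.
  intros [s0 Hs0] [Hlb _] Hback y. split.
  - intros H s Hs. destruct (as_atom_inv _ _ H) as [[Hz _] _].
    rewrite <- (T_le_eq m s (T_mono _ _ (Hlb s Hs)) Hz). exact H.
  - intro H. assert (E : T m = T s0).
    { apply Hback. intros s Hs. pose proof (H s Hs) as H1. pose proof (H s0 Hs0) as H2.
      destruct (as_atom_inv _ _ H1) as [_ E1]. destruct (as_atom_inv _ _ H2) as [_ E2]. congruence. }
    rewrite E. exact (H s0 Hs0). Qed.
End Sel.
Definition gl (u : car A) : pf X := fun p => match th u p with Some _ => Some p | None => None end.
Lemma gl_hg u p : gl u p <> None <-> th u p <> None.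
Proof. unfold gl; destruct (th u p); split; congruence. Qed.
Lemma gl_hT u a p : th (lhd A u a) p = pf_comp (gl u) (th a) p.
Proof. rewrite lhd_th; unfold pf_comp, gl; destruct (th u p); reflexivity. Qed.
Lemma gc_hg (x : car A) p : th x p <> None <-> th x p <> None.
Proof. tauto. Qed.
Lemma gc_hT (x : car A) a p : th (comp x a) p = pf_comp (th x) (th a) p.
Proof. apply hcomp. Qed.

Lemma sim_iff a b : sim A a b <-> forall p, (th a p = None <-> th b p = None).
Proof. unfold sim. split.
- intros [H1 H2] p. split; intro E.
  + rewrite <- H1, lhd_th, E. reflexivity.
  + rewrite <- H2, lhd_th, E. reflexivity.
- intros H; split; apply inj; intro p; rewrite lhd_th.
  + destruct (th a p) eqn:E; [reflexivity| symmetry; apply H; exact E].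
  + destruct (th b p) eqn:E; [reflexivity| symmetry; apply H; exact E].
Qed.

Lemma sim_equiv : Equivalence (sim A).
Proof. split.
  - intro a. apply sim_iff. tauto.
  - intros a b H. rewrite sim_iff in *. intro p. specialize (H p). tauto.
  - intros a b c H1 H2. rewrite sim_iff in *. intro p. specialize (H1 p). specialize (H2 p). tauto.
Qed.

Lemma wd_comp a x : atom A x -> is_zero A (comp x a) \/ atom A (comp x a).
Proof. intro Hx. destruct (classic (is_zero A (comp x a))); [left; auto|right].
  exact (T_atom x (th x) (comp x) Hx (gc_hg x) (gc_hT x) a H). Qed.

Lemma wd_lhd a x : atom A x -> is_zero A (lhd A x a) \/ atom A (lhd A x a).
Proof. intro Hx. destruct (classic (is_zero A (lhd A x a))); [left; auto|right].
  exact (T_atom x (gl x) (lhd A x) Hx (gl_hg x) (gl_hT x) a H). Qed.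

Lemma lhd_sim a x y : sim A x y -> lhd A x a = lhd A y a.
Proof. rewrite sim_iff. intro H. apply inj; intro p. rewrite !lhd_th. specialize (H p).
  destruct (th x p), (th y p); try reflexivity; exfalso; destruct H as [H1 H2]; [specialize (H2 eq_refl)|specialize (H1 eq_refl)]; discriminate. Qed.

Lemma restr_neq c a b (T : car A -> car A) :
  (forall a p, th (T a) p = match th c p with Some _ => th a p | None => None end) ->
  atom A c -> le A c a -> ~ le A c b -> as_atom A (T a) <> as_atom A (T b).
Proof. intros hT Hc Hca Hcb E.
  assert (Ta : T a = c).
  { apply inj; intro p. rewrite hT. rewrite le_iff in Hca. destruct (th c p) eqn:Ec; [apply Hca; exact Ec| reflexivity]. }
  rewrite Ta in E. destruct (as_atom_some c Hc) as [w [Hw Ew]]. rewrite Hw in E. symmetry in E.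
  destruct (as_atom_inv _ _ E) as [_ Ew2]. apply Hcb. apply le_iff. intros p y Hp.
  assert (Tb : T b = c) by congruence.
  pose proof (hT b p) as Hb. rewrite Tb, Hp in Hb. exact (eq_sym Hb). Qed.

Lemma sep_key a b : atoms_separating A -> a <> b ->
  exists c, atom A c /\ ((le A c a /\ ~ le A c b) \/ (le A c b /\ ~ le A c a)).
Proof. intros Hs Hne. destruct (classic (le A a b)) as [H1|H1].
 - destruct (classic (le A b a)) as [H2|H2].
   + exfalso; apply Hne; apply le_antisym; auto.
   + destruct (Hs b a H2) as [c [? [? ?]]]. exists c; auto.
 - destruct (Hs a b H1) as [c [? [? ?]]]. exists c; auto. Qed.

Lemma inj_gen (Y Z : Type) (th' : car A -> Y -> option Z) : atoms_separating A ->
  (forall c, atom A c -> exists y (T : car A -> car A),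
     (forall a p, th (T a) p = match th c p with Some _ => th a p | None => None end) /\
     forall a b, th' a y = th' b y -> as_atom A (T a) = as_atom A (T b)) ->
  forall a b, (forall y, th' a y = th' b y) -> a = b.
Proof. intros Hs Hpt a b H. apply NNPP; intro Hne.
  destruct (sep_key a b Hs Hne) as [c [Hc [[H1 H2]|[H1 H2]]]];
  destruct (Hpt c Hc) as [y [T [hT hV]]].
  - apply (restr_neq c a b T hT Hc H1 H2). apply hV. apply H.
  - apply (restr_neq c b a T hT Hc H1 H2). apply hV. symmetry; apply H. Qed.

Lemma cj_comp x S j : comp_cld_joins A -> is_join A S j -> ~ is_zero A (comp x j) -> exists s, S s /\ ~is_zero A (comp x s).
Proof. intros Hc Hj Hz. apply NNPP; intro Hn. apply Hz. destruct (Hc S j x Hj) as [_ Hl].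
  assert (L : le A (comp x j) (prec x x)).
  { apply Hl. intros t [s [Hs ->]]. apply le_iff. intros p y Hp. exfalso. apply Hn. exists s. split; auto.
    intro H. rewrite zero_iff in H. rewrite H in Hp. discriminate. }
  apply zero_iff. intro p. destruct (th (comp x j) p) eqn:E; [|reflexivity]. rewrite le_iff in L. apply L in E.
  rewrite hprec in E. unfold pf_prec in E. destruct (th x p); congruence. Qed.

Lemma cj_lhd u S j : is_join A S j -> ~ is_zero A (lhd A u j) -> exists s, S s /\ ~ is_zero A (lhd A u s).
Proof. intros [Hub Hl] Hz. apply NNPP; intro Hn. apply Hz.
  assert (Hs0 : forall s, S s -> forall p, th u p <> None -> th s p = None).
  { intros s Hs p Hu. destruct (th s p) eqn:E; [|reflexivity]. exfalso. apply Hn. exists s. split; [exact Hs|].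
    rewrite zero_iff. intro H. specialize (H p). rewrite lhd_th in H. destruct (th u p); congruence. }
  assert (L : le A j (prec u j)).
  { apply Hl. intros s Hs. apply le_iff. intros p y Hp. rewrite hprec. unfold pf_prec. destruct (th u p) eqn:Eu.
    - rewrite (Hs0 s Hs p) in Hp; [discriminate| congruence].
    - exact (proj1 (le_iff s j) (Hub s Hs) p y Hp). }
  apply zero_iff. intro p. rewrite lhd_th. destruct (th u p) eqn:Eu; [|reflexivity].
  destruct (th j p) eqn:Ej; [|reflexivity]. rewrite le_iff in L. apply L in Ej. rewrite hprec in Ej.
  unfold pf_prec in Ej. rewrite Eu in Ej. discriminate. Qed.

Lemma cm_comp x S m : comp_cld_meets A -> (exists s, S s) -> is_meet A S m ->
  forall v, (forall s, S s -> comp x s = v) -> comp x m = v.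
Proof. intros Hc Hne Hm v Hv. destruct Hne as [s0 Hs0].
  destruct (Hc S m x (ex_intro _ s0 Hs0) Hm) as [Hlb Hgl]. apply le_antisym.
  - rewrite <- (Hv s0 Hs0). apply Hlb. exists s0; auto.
  - apply Hgl. intros t [s [Hs ->]]. rewrite (Hv s Hs). apply le_iff; auto. Qed.

Lemma cm_lhd u S m : (exists s, S s) -> is_meet A S m ->
  forall v, (forall s, S s -> lhd A u s = v) -> lhd A u m = v.
Proof. intros [s0 Hs0] [Hlb Hgl] v Hv.
  assert (Lv : le A v m).
  { apply Hgl. intros s Hs. rewrite <- (Hv s Hs). apply le_iff. intros p y. rewrite lhd_th. destruct (th u p); [auto|discriminate]. }
  apply le_antisym.
  - rewrite <- (Hv s0 Hs0). apply le_iff. intros p y. rewrite !lhd_th. destruct (th u p); [|discriminate].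
    apply (proj1 (le_iff _ _) (Hlb s0 Hs0)).
  - apply le_iff. intros p y Hp. rewrite lhd_th. pose proof Hp as Hp'. rewrite <- (Hv s0 Hs0) in Hp'.
    rewrite lhd_th in Hp'. destruct (th u p); [|discriminate]. exact (proj1 (le_iff _ _) Lv p y Hp). Qed.

Lemma V_dom x (hx : atom A x) (hdom : forall a p, th (dom a) p = pf_dom (th a) p) a :
  as_atom A (comp x (dom a)) = match as_atom A (comp x a) with Some _ => as_atom A x | None => None end.
Proof. destruct (classic (is_zero A (comp x a))) as [Hz|Hz].
 - rewrite (as_atom_zero _ Hz). apply as_atom_zero. apply (T_zero_of (th x) (comp x) (gc_hT x)).
   intros p q Hq. rewrite hdom. unfold pf_dom. rewrite (T_zero (th x) (comp x) (gc_hT x) a Hz p q Hq). reflexivity.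
 - destruct (as_atom_some _ (T_atom x (th x) (comp x) hx (gc_hg x) (gc_hT x) a Hz)) as [w [Hw _]]. rewrite Hw.
   f_equal. apply inj. intro p. rewrite hcomp. unfold pf_comp. destruct (th x p) as [c|] eqn:E; [|reflexivity].
   rewrite hdom. unfold pf_dom. pose proof (T_total x (th x) (comp x) hx (gc_hg x) (gc_hT x) a Hz p c E).
   destruct (th a c); congruence. Qed.

Lemma V_antidom x (hx : atom A x) (hadom : forall a p, th (antidom a) p = pf_antidom (th a) p) a :
  as_atom A (comp x (antidom a)) = match as_atom A (comp x a) with Some _ => None | None => as_atom A x end.
Proof. destruct (classic (is_zero A (comp x a))) as [Hz|Hz].
 - rewrite (as_atom_zero _ Hz). f_equal. apply inj. intro p. rewrite hcomp. unfold pf_comp. destruct (th x p) as [c|] eqn:E; [|reflexivity].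
   rewrite hadom. unfold pf_antidom. rewrite (T_zero (th x) (comp x) (gc_hT x) a Hz p c E). reflexivity.
 - destruct (as_atom_some _ (T_atom x (th x) (comp x) hx (gc_hg x) (gc_hT x) a Hz)) as [w [Hw _]]. rewrite Hw.
   apply as_atom_zero. apply (T_zero_of (th x) (comp x) (gc_hT x)).
   intros p q Hq. rewrite hadom. unfold pf_antidom. pose proof (T_total x (th x) (comp x) hx (gc_hg x) (gc_hT x) a Hz p q Hq).
   destruct (th a q); congruence. Qed.

Lemma theta1_inl a x : theta1 A a (inl x) = opt_map inl (as_atom A (comp (proj1_sig x) a)).
Proof. reflexivity. Qed.
Lemma theta1_inr a C : theta1 A a (inr C) = opt_map inl (as_atom A (lhd A (rep A C) a)).
Proof. reflexivity. Qed.

Lemma rep_spec (C : AtQ A) : atom A (rep A C) /\ forall y, proj1_sig C y <-> atom A y /\ sim A (rep A C) y.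
Proof. unfold rep. destruct (constructive_indefinite_description _ (proj2_sig C)) as [r Hr]. simpl. exact Hr. Qed.
Lemma rep_atom C : atom A (rep A C).
Proof. exact (proj1 (rep_spec C)). Qed.

Lemma opt_inl_eq (o : option (At A)) w : opt_map (@inl (At A) (AtQ A)) o = Some (inl w) <-> o = Some w.
Proof. destruct o; simpl; split; congruence. Qed.
Lemma opt_inl_none (o : option (At A)) (D : AtQ A) : opt_map (@inl (At A) (AtQ A)) o <> Some (inr D).
Proof. destruct o; simpl; congruence. Qed.

Ltac dall := repeat match goal with |- context [as_atom ?A0 ?t] => destruct (as_atom A0 t) end.

Lemma main_theta1 (sigma : sym -> Prop)
  (hmeet : sigma Meet -> forall a b x, th (meet a b) x = pf_meet (th a) (th b) x)
  (hupd : sigma Upd -> forall a b x, th (upd a b) x = pf_upd (th a) (th b) x)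
  (hjoin : sigma Join -> forall a b x, th (join a b) x = pf_join (th a) (th b) x)
  (hsep : atoms_separating A) (hs : ~ sigma Dom /\ ~ sigma Antidom) :
  is_rep A sigma _ (theta1 A) /\
  (comp_cld_joins A -> join_complete A (theta1 A)) /\
  (comp_cld_meets A -> meet_complete A (theta1 A)).
Proof.
  split; [|split].
  - unfold is_rep. split; [|split;[|split;[|split;[|split;[|split;[|split]]]]]].
    + apply (inj_gen _ _ (theta1 A) hsep). intros c Hc.
      set (C := exist (fun C : car A -> Prop => exists x, atom A x /\ forall y, C y <-> (atom A y /\ sim A x y))
                  (fun y => atom A y /\ sim A c y) (ex_intro _ c (conj Hc (fun y => conj (fun h => h) (fun h => h))))).
      destruct (rep_spec C) as [Hr Hrs].
      assert (Hsc : sim A (rep A C) c). { apply (Hrs c). simpl. split; [exact Hc| apply sim_iff; tauto]. }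
      exists (inr C), (lhd A (rep A C)). split.
      * intros a p. rewrite lhd_th. rewrite sim_iff in Hsc. specialize (Hsc p).
        destruct (th (rep A C) p), (th c p); try reflexivity; destruct Hsc as [H1 H2];
          [specialize (H2 eq_refl) | specialize (H1 eq_refl)]; discriminate.
      * intros a b E. rewrite !theta1_inr in E.
        destruct (as_atom A (lhd A (rep A C) a)), (as_atom A (lhd A (rep A C) b)); simpl in E; congruence.
    + intros _ a b [x|C]; unfold pf_prec; rewrite ?theta1_inl, ?theta1_inr;
      [rewrite (V_prec _ _ _ (proj2_sig x) (gc_hg _) (gc_hT _)) | rewrite (V_prec _ _ _ (rep_atom C) (gl_hg _) (gl_hT _))];
      dall; reflexivity.
    + intros _ a b [x|C]; unfold pf_comp; rewrite ?theta1_inl, ?theta1_inr;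
      [rewrite (V_comp _ _ _ (proj2_sig x) (gc_hg _) (gc_hT _)) | rewrite (V_comp _ _ _ (rep_atom C) (gl_hg _) (gl_hT _))];
      (destruct (as_atom A _) as [w|]; simpl; reflexivity).
    + intros Hm a b [x|C]; unfold pf_meet; rewrite ?theta1_inl, ?theta1_inr;
      [rewrite (V_meet _ _ _ (proj2_sig x) (gc_hg _) (gc_hT _) (hmeet Hm)) | rewrite (V_meet _ _ _ (rep_atom C) (gl_hg _) (gl_hT _) (hmeet Hm))];
      dall; simpl; try reflexivity;
      repeat match goal with |- context [excluded_middle_informative ?P] => destruct (excluded_middle_informative P) end;
      simpl; congruence.
    + intros Hm a b [x|C]; unfold pf_upd; rewrite ?theta1_inl, ?theta1_inr;
      [rewrite (V_upd _ _ _ (proj2_sig x) (gc_hg _) (gc_hT _) (hupd Hm)) | rewrite (V_upd _ _ _ (rep_atom C) (gl_hg _) (gl_hT _) (hupd Hm))];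
      dall; reflexivity.
    + intros Hm a b [x|C]; unfold pf_join; rewrite ?theta1_inl, ?theta1_inr;
      [rewrite (V_join _ _ _ (proj2_sig x) (gc_hg _) (gc_hT _) (hjoin Hm)) | rewrite (V_join _ _ _ (rep_atom C) (gl_hg _) (gl_hT _) (hjoin Hm))];
      dall; reflexivity.
    + intro H; exfalso; tauto.
    + intro H; exfalso; tauto.
  - intros Hcj S j Hj [x|C] [w|D].
    + rewrite theta1_inl, opt_inl_eq.
      rewrite (V_join_complete _ _ _ (proj2_sig x) (gc_hg _) (gc_hT _) S j Hj (cj_comp _ S j Hcj Hj) w).
      split; intros [s [Hs H]]; exists s; split; auto; rewrite theta1_inl in *; apply opt_inl_eq; auto.
    + split; [intro H | intros [s [_ H]]]; rewrite theta1_inl in H; exfalso; exact (opt_inl_none _ _ H).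
    + rewrite theta1_inr, opt_inl_eq.
      rewrite (V_join_complete _ _ _ (rep_atom C) (gl_hg _) (gl_hT _) S j Hj (cj_lhd _ S j Hj) w).
      split; intros [s [Hs H]]; exists s; split; auto; rewrite theta1_inr in *; apply opt_inl_eq; auto.
    + split; [intro H | intros [s [_ H]]]; rewrite theta1_inr in H; exfalso; exact (opt_inl_none _ _ H).
  - intros Hcm S m Hne Hm [x|C] [w|D].
    + rewrite theta1_inl, opt_inl_eq.
      rewrite (V_meet_complete _ _ _ (proj2_sig x) (gc_hg _) (gc_hT _) S m Hne Hm (cm_comp _ S m Hcm Hne Hm) w).
      split; intros H s Hs; specialize (H s Hs); rewrite theta1_inl in *; apply opt_inl_eq; auto.
    + destruct Hne as [s0 Hs0]. split; [intro H | intro H; specialize (H s0 Hs0)]; rewrite theta1_inl in H; exfalso; exact (opt_inl_none _ _ H).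
    + rewrite theta1_inr, opt_inl_eq.
      rewrite (V_meet_complete _ _ _ (rep_atom C) (gl_hg _) (gl_hT _) S m Hne Hm (cm_lhd _ S m Hne Hm) w).
      split; intros H s Hs; specialize (H s Hs); rewrite theta1_inr in *; apply opt_inl_eq; auto.
    + destruct Hne as [s0 Hs0]. split; [intro H | intro H; specialize (H s0 Hs0)]; rewrite theta1_inr in H; exfalso; exact (opt_inl_none _ _ H).
Qed.
Lemma main_theta2 (sigma : sym -> Prop)
  (hmeet : sigma Meet -> forall a b x, th (meet a b) x = pf_meet (th a) (th b) x)
  (hupd : sigma Upd -> forall a b x, th (upd a b) x = pf_upd (th a) (th b) x)
  (hjoin : sigma Join -> forall a b x, th (join a b) x = pf_join (th a) (th b) x)
  (hdom : sigma Dom -> forall a x, th (dom a) x = pf_dom (th a) x)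
  (hadom : sigma Antidom -> forall a x, th (antidom a) x = pf_antidom (th a) x)
  (hsep : atoms_separating A) (hs : sigma Dom \/ sigma Antidom) :
  is_rep A sigma _ (theta2 A) /\
  (comp_cld_joins A -> join_complete A (theta2 A)) /\
  (comp_cld_meets A -> meet_complete A (theta2 A)).
Proof.
  split; [|split].
  - unfold is_rep. split; [|split;[|split;[|split;[|split;[|split;[|split]]]]]].
    + apply (inj_gen _ _ (theta2 A) hsep). intros c Hc.
      assert (HD : exists d, forall p, th d p = match th c p with Some _ => Some p | None => None end).
      { destruct hs as [HD|HA].
        - exists (dom c). intro p. rewrite (hdom HD). reflexivity.
        - exists (antidom (antidom c)). intro p. rewrite (hadom HA). unfold pf_antidom. rewrite (hadom HA).
          unfold pf_antidom. destruct (th c p); reflexivity. }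
      destruct HD as [d Hd].
      assert (Hdat : atom A d).
      { apply (atom_sub c d Hc).
        - intro Hz. apply (proj1 Hc). apply zero_iff. intro p. rewrite zero_iff in Hz. specialize (Hz p).
          rewrite Hd in Hz. destruct (th c p); congruence.
        - intro p. rewrite Hd. destruct (th c p); congruence. }
      exists (exist _ d Hdat), (comp d). split.
      * intros a p. rewrite hcomp. unfold pf_comp. rewrite Hd. destruct (th c p); reflexivity.
      * intros a b E. exact E.
    + intros _ a b x. exact (V_prec _ _ _ (proj2_sig x) (gc_hg _) (gc_hT _) a b).
    + intros _ a b x. exact (V_comp _ _ _ (proj2_sig x) (gc_hg _) (gc_hT _) a b).
    + intros Hm a b x. exact (V_meet _ _ _ (proj2_sig x) (gc_hg _) (gc_hT _) (hmeet Hm) a b).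
    + intros Hm a b x. exact (V_upd _ _ _ (proj2_sig x) (gc_hg _) (gc_hT _) (hupd Hm) a b).
    + intros Hm a b x. exact (V_join _ _ _ (proj2_sig x) (gc_hg _) (gc_hT _) (hjoin Hm) a b).
    + intros Hm a x. unfold pf_dom. unfold theta2 at 1. rewrite (V_dom _ (proj2_sig x) (hdom Hm)).
      unfold theta2. destruct (as_atom A (comp (proj1_sig x) a)); [apply as_atom_self | reflexivity].
    + intros Hm a x. unfold pf_antidom. unfold theta2 at 1. rewrite (V_antidom _ (proj2_sig x) (hadom Hm)).
      unfold theta2. destruct (as_atom A (comp (proj1_sig x) a)); [reflexivity | apply as_atom_self].
  - intros Hcj S j Hj x w.
    exact (V_join_complete _ _ _ (proj2_sig x) (gc_hg _) (gc_hT _) S j Hj (cj_comp _ S j Hcj Hj) w).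
  - intros Hcm S m Hne Hm x w.
    exact (V_meet_complete _ _ _ (proj2_sig x) (gc_hg _) (gc_hT _) S m Hne Hm (cm_comp _ S m Hcm Hne Hm) w).
Qed.
End Main.

Theorem proposition6p1 :
  forall (A : alg) (sigma : sym -> Prop),
    sigma Prec -> sigma Comp ->
    representable A sigma ->
    atoms_separating A ->
    (* ~ is an equivalence relation *)
    Equivalence (sim A) /\
    (* well-definedness: values are atoms (or 0) ... *)
    (forall a x : car A, atom A x -> is_zero A (comp x a) \/ atom A (comp x a)) /\
    (forall a x : car A, atom A x -> is_zero A (lhd A x a) \/ atom A (lhd A x a)) /\
    (* ... and x ◁ a does not depend on the representative of x/~ *)
    (forall a x y : car A, atom A x -> atom A y -> sim A x y -> lhd A x a = lhd A y a) /\
    ((~ sigma Dom /\ ~ sigma Antidom) ->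
       is_rep A sigma _ (theta1 A) /\
       (comp_cld_joins A -> join_complete A (theta1 A)) /\
       (comp_cld_meets A -> meet_complete A (theta1 A))) /\
    ((sigma Dom \/ sigma Antidom) ->
       is_rep A sigma _ (theta2 A) /\
       (comp_cld_joins A -> join_complete A (theta2 A)) /\
       (comp_cld_meets A -> meet_complete A (theta2 A))).
Proof.
  intros A sigma HP HC [X [th [hinj [hp [hc [hm [hu [hj [hd ha]]]]]]]]] Hsep.
  specialize (hp HP). specialize (hc HC).
  split; [exact (sim_equiv A X th hinj hp)|].
  split; [intros a x Hx; exact (wd_comp A X th hinj hp hc a x Hx)|].
  split; [intros a x Hx; exact (wd_lhd A X th hinj hp a x Hx)|].
  split; [intros a x y _ _ H; exact (lhd_sim A X th hinj hp a x y H)|].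
  split.
  - intro Hs. exact (main_theta1 A X th hinj hp hc sigma hm hu hj Hsep Hs).
  - intro Hs. exact (main_theta2 A X th hinj hp hc sigma hm hu hj hd ha Hsep Hs).
Qed.
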